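(* Let $T$ be a tree with exactly three pendant vertices $u_1,u_2,u_3$ and major vertex $m$, with $d(u_1,m)\equiv 0$, $d(u_2,m)\equiv 2$ and $d(u_3,m)\equiv 0\pmod 3$. Then there exists an eigenvector $x$ of $L(T)$ with eigenvalue $1$ such that for every $k\in\{1,2,3\}$ and every vertex $v$ on the path $P_{u_k,m}$ with $d(v,u_k)\equiv 1\pmod 3$, one has $x(v)=0$.
   Context: $L(T)=D(T)-A(T)$ is the Laplacian matrix of $T$. A pendant vertex has degree $1$; a major vertex has degree at least $3$. $P_{r,s}$ is the path in $T$ from $r$ to $s$, and $d$ denotes distance. *)

(* Defs.v *)
From mathcomp Require Import all_boot all_order all_algebra.
Set Implicit Arguments. Unset Strict Implicit. Unset Printing Implicit Defensive.
Import Order.TTheory GRing.Theory Num.Theory.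

Section Graphs.
Variable n : nat.
Variable e : rel 'I_n.

Definition simple_graph : Prop := symmetric e /\ irreflexive e.

Definition deg (v : 'I_n) : nat := #|[set w | e v w]|.
Definition pendant (v : 'I_n) : bool := deg v == 1%N.
Definition major (v : 'I_n) : bool := (3 <= deg v)%N.

(* walk from u to v given as its sequence of vertices after u *)
Definition walk (u v : 'I_n) (s : seq 'I_n) : bool := path e u s && (last u s == v).

Definition connected_graph : Prop := forall u v : 'I_n, exists s, walk u v s.

Definition acyclic : Prop :=
  forall s : seq 'I_n, (3 <= size s)%N -> uniq s -> ~~ cycle e s.

Definition is_tree : Prop := simple_graph /\ connected_graph /\ acyclic.

(* distance: least length k of a walk from u to v (#|T| if none exists) *)
Definition dist (u v : 'I_n) : nat :=
  find (fun k => [exists s : k.-tuple 'I_n, walk u v s]) (iota 0 n).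

(* v lies on the (vertex set of the) path P_{u,w}: some walk from u to w
   without repeated vertices passes through v *)
Definition on_path (u w v : 'I_n) : Prop :=
  exists s : seq 'I_n, [&& walk u w s, uniq (u :: s) & v \in u :: s].

Definition laplacian (R : nzRingType) : 'M[R]_n :=
  (\matrix_(i, j) ((if i == j then (deg i)%:R else 0) - (if e i j then 1 else 0)))%R.
End Graphs.

(* Main.v *)
Require Import Defs.
From mathcomp Require Import all_boot all_order all_algebra zify ring.
Set Implicit Arguments. Unset Strict Implicit. Unset Printing Implicit Defensive.
Import GRing.Theory Num.Theory.

Section Tree.
Variable n : nat.
Variable e : rel 'I_n.
Hypothesis esym : symmetric e.
Hypothesis eirr : irreflexive e.
Hypothesis conn : connected_graph e.
Hypothesis acyc : acyclic e.

Lemma walk_cat a b c s1 s2 : walk e a b s1 -> walk e b c s2 -> walk e a c (s1 ++ s2).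
Proof.
rewrite /walk => /andP[p1 /eqP l1] /andP[p2 l2].
by rewrite cat_path p1 last_cat l1 p2.
Qed.

Lemma walk_rev a b s : walk e a b s -> walk e b a (rev (belast a s)).
Proof.
rewrite /walk => /andP[p1 /eqP l1]; apply/andP; split.
  rewrite -l1 rev_path; apply: sub_path p1 => x y; by rewrite esym.
case: s p1 l1 => [|x s] /= _; first by move=> ->.
by rewrite rev_cons last_rcons.
Qed.

Lemma size_rev_belast (a : 'I_n) s : size (rev (belast a s)) = size s.
Proof. by rewrite size_rev size_belast. Qed.

Lemma mem_rev_belast (a : 'I_n) s y : y \in rev (belast a s) -> y \in a :: s.
Proof.
rewrite mem_rev; elim: s a => [|x s IH] a //= .
rewrite inE => /orP[/eqP->|/IH]; first by rewrite mem_head.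
by move=> h; rewrite inE h orbT.
Qed.

Lemma dist_le u v s : walk e u v s -> (dist e u v <= size s)%N.
Proof.
move=> w; rewrite /dist.
case: (ltnP (size s) n) => hs.
  rewrite leqNgt; apply/negP => hlt; have := before_find 0 hlt.
  rewrite nth_iota // add0n => /negbT/negP; apply.
  apply/existsP; exists (in_tuple s); by [].
by apply: leq_trans (find_size _ _) _; rewrite size_iota.
Qed.

Lemma uniq_size_lt (a : 'I_n) s : uniq (a :: s) -> (size s < n)%N.
Proof.
move=> /card_uniqP /= h; have := max_card (mem (a :: s)).
by rewrite h card_ord.
Qed.

Lemma dist_ex u v : exists s, walk e u v s /\ size s = dist e u v.
Proof.
have [s0 w0] := conn u v.
move: w0; rewrite /walk => /andP[p0 /eqP l0].
case: (shortenP p0) l0 => s' p' u' _ l'.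
have hs : (size s' < n)%N by exact: uniq_size_lt u'.
set P := (fun k => [exists s : k.-tuple 'I_n, walk e u v s]).
have hP : has P (iota 0 n).
  apply/hasP; exists (size s'); first by rewrite mem_iota.
  apply/existsP; exists (in_tuple s'); by rewrite /walk p' l' eqxx.
have := nth_find 0 hP; rewrite has_find size_iota in hP.
rewrite nth_iota // add0n.
move=> /existsP [t wt]; exists t; split => //; by rewrite size_tuple.
Qed.


Variable m : 'I_n.
Local Notation d y := (dist e y m).

Lemma d_m : d m = 0%N.
Proof. by apply/eqP; rewrite -leqn0; apply: (@dist_le _ _ [::]); rewrite /walk /= eqxx. Qed.

Lemma d0 y : d y = 0%N -> y = m.
Proof. by move=> h; have [s [/andP [_ /eqP]]] := dist_ex y m; rewrite h => <- /size0nil ->. Qed.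

Lemma d_edge y z : e y z -> (d y <= (d z).+1)%N.
Proof.
move=> hyz; have [s [w hs]] := dist_ex z m; rewrite -hs.
apply: (@dist_le _ _ (z :: s)); move: w; by rewrite /walk /= hyz.
Qed.

Lemma avoid a s c : walk e a m s -> c \in s -> (d c < size s)%N.
Proof.
move=> w hc; move: w; case/splitPr: hc => s1 s2; rewrite /walk cat_path last_cat /= => /andP[/andP[_ /andP[_ p2]] l2]; have w2 : walk e c m s2 by rewrite /walk p2 l2.
have := dist_le w2; rewrite size_cat /=; lia.
Qed.

Lemma LB3 c a b s1 s2 : e c a -> e c b -> a != b ->
  walk e a m s1 -> c \notin a :: s1 -> walk e b m s2 -> c \notin b :: s2 -> False.
Proof.
move=> hca hcb hab w1 n1 w2 n2.
have w := walk_cat w1 (walk_rev w2).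
move: w; rewrite /walk => /andP[p /eqP l].
case: (shortenP p) l => s' p' u' sub' l'.
have nc : c \notin a :: s'.
  apply/negP; rewrite inE => /orP[/eqP ca|cs]; first by move: n1; rewrite ca mem_head.
  move: (sub' _ cs); rewrite mem_cat => /orP[h|/mem_rev_belast h].
    by move: n1; rewrite inE h orbT.
  by move: n2; rewrite h.
have hs : (3 <= size (c :: a :: s'))%N.
  case: s' l' {p' u' sub' nc} => [|x s'] /=; first by move=> ab; move: hab; rewrite ab eqxx.
  by [].
have hu : uniq (c :: a :: s') by rewrite cons_uniq nc u'.
have hc : cycle e (c :: a :: s') by rewrite /cycle /= hca rcons_path p' l' /= esym hcb.
by move: (acyc hs hu); rewrite hc.
Qed.

Lemma geo y : exists s, walk e y m s /\ size s = d y.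
Proof. exact: dist_ex. Qed.

Lemma LB2 c a b : e c a -> e c b -> a != b -> (d a <= d c)%N -> (d b <= d c)%N -> False.
Proof.
move=> hca hcb hab la lb.
have [s1 [w1 h1]] := geo a; have [s2 [w2 h2]] := geo b.
apply: (LB3 hca hcb hab w1 _ w2).
  rewrite inE negb_or; apply/andP; split.
    by apply/eqP => ca; move: hca; rewrite ca eirr.
  by apply/negP => /(avoid w1); lia.
rewrite inE negb_or; apply/andP; split.
  by apply/eqP => ca; move: hcb; rewrite ca eirr.
by apply/negP => /(avoid w2); lia.
Qed.

Definition par y := odflt y [pick z | e y z && ((d z).+1 == d y)].

Lemma par_spec y : y != m -> e y (par y) /\ (d (par y)).+1 = d y.
Proof.
move=> ym; have [s [w hs]] := geo y.
case: s w hs => [|z s] w hs.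
  by move: ym; move: w; rewrite /walk /= => /eqP ->; rewrite eqxx.
move: w; rewrite /walk /= => /andP[/andP[hyz pz] lz].
have wz : walk e z m s by rewrite /walk pz lz.
have h1 := dist_le wz; have h2 := d_edge hyz.
rewrite /par; case: pickP => [z' /andP[h /eqP h']|h] //=.
by move: (h z); rewrite hyz /=; move: hs h1 h2 => /= <-; case: ltngtP => //; lia.
Qed.

Lemma d_par y : d (par y) = (d y).-1.
Proof.
case: (eqVneq y m) => [->|ym]; last by have [_ <-] := par_spec ym.
rewrite /par; case: pickP => [z /andP[_ /eqP]|_] /=; by rewrite d_m.
Qed.

Lemma d_pos y : y != m -> (0 < d y)%N.
Proof. move=> ym; rewrite lt0n; apply/eqP => /d0 h; by rewrite h eqxx in ym. Qed.

Lemma par_uniq y z : e y z -> (d z).+1 = d y -> par y = z.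
Proof.
move=> hyz hd; have ym : y != m by apply/eqP => ym; move: hd; rewrite ym d_m.
have [hp hdp] := par_spec ym.
case: (eqVneq z (par y)) => [//|nz].
exfalso; apply: (LB2 hyz hp nz); lia.
Qed.

Lemma F1 y z : e y z -> d z = (d y).+1 \/ d y = (d z).+1.
Proof.
move=> hyz; have h1 := d_edge hyz; have h2 := d_edge (y := z) (z := y); rewrite esym in h2.
have {}h2 := h2 hyz.
case: (ltngtP (d y) (d z)) => h; [left; lia | right; lia |].
exfalso; case: (eqVneq y m) => [ym|ym].
  move: h; rewrite ym d_m => h0; have zm := d0 (sym_equal h0); move: hyz; by rewrite ym zm eirr.
have [hp hdp] := par_spec ym.
have nz : z != par y by apply/eqP => zp; move: hdp; rewrite -zp h; lia.
apply: (LB2 hyz hp nz); lia.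
Qed.

Lemma child y z : e y z -> z != par y -> d z = (d y).+1.
Proof.
move=> hyz nz; case: (F1 hyz) => // h.
by move: nz; rewrite (par_uniq hyz (sym_equal h)) eqxx.
Qed.

Lemma par_child y z : e y z -> d z = (d y).+1 -> par z = y.
Proof. by move=> hyz hd; apply: par_uniq; rewrite // esym. Qed.

Lemma d_iter j y : d (iter j par y) = (d y - j)%N.
Proof. elim: j => [|j IH]; first by rewrite subn0. by rewrite iterS d_par IH; lia. Qed.

Definition anc k y := iter (d y - k) par y.

Lemma d_anc k y : (k <= d y)%N -> d (anc k y) = k.
Proof. rewrite /anc d_iter; lia. Qed.

Lemma anc_anc j k y : (j <= k)%N -> (k <= d y)%N -> anc j (anc k y) = anc j y.
Proof.
move=> hjk hk; rewrite {1}/anc d_anc // /anc -iterD; congr iter; lia.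
Qed.

Lemma anc_child k y z : par z = y -> d z = (d y).+1 -> (k <= d y)%N -> anc k z = anc k y.
Proof.
move=> hp hd hk; rewrite /anc hd.
have -> : ((d y).+1 - k = (d y - k).+1)%N by lia.
by rewrite iterSr hp.
Qed.

Lemma anc_self y : anc (d y) y = y.
Proof. by rewrite /anc subnn. Qed.

Variables u1 u2 u3 : 'I_n.
Hypothesis huniq : uniq [:: u1; u2; u3].
Hypothesis hpend : forall v, pendant e v = (v \in [:: u1; u2; u3]).
Hypothesis hmaj : major e m.

Lemma nbr_set y : y != m -> (forall z, e y z -> z = par y) -> pendant e y.
Proof.
move=> ym h; rewrite /pendant /deg.
have -> : [set z | e y z] = [set par y].
  apply/setP => z; rewrite !inE; apply/idP/eqP; first exact: h.
  by move=> ->; have [] := par_spec ym.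
by rewrite cards1.
Qed.

Lemma leaf_below w : w != m -> exists y, [/\ (d w <= d y)%N, anc (d w) y = w & pendant e y].
Proof.
move=> wm.
pose S := [set y | (d w <= d y)%N && (anc (d w) y == w)].
have wS : w \in S by rewrite inE leqnn anc_self eqxx.
have [y yS ymax] := @arg_maxnP _ w (fun y => y \in S) (fun y => d y) wS.
move: (yS); rewrite inE => /andP[hy /eqP hay].
have ym : y != m by apply/eqP => ym; have := d_pos wm; move: hy; rewrite ym d_m; lia.
exists y; split => //; apply: nbr_set => // z hyz.
apply/eqP; apply/negPn/negP => nz.
have hdz := child hyz nz.
have hpz := par_child hyz hdz.
have zS : z \in S.
  by rewrite inE hdz (anc_child hpz hdz hy) hay eqxx andbT; lia.
have := ymax z zS; lia.
Qed.

Lemma four a b c x : uniq [:: a; b; c; x] -> pendant e a -> pendant e b ->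
  pendant e c -> pendant e x -> False.
Proof.
move=> hu ha hb hc hx.
have : (size [:: a; b; c; x] <= size [:: u1; u2; u3])%N.
  apply: uniq_leq_size => // z; rewrite -hpend !inE.
  by move=> /or4P[] /eqP ->.
by [].
Qed.

Lemma two_nbrs v b : (3 <= deg e v)%N -> exists n1 n2, [/\ e v n1, e v n2, n1 != n2, n1 != b & n2 != b].
Proof.
move=> h; have hc := cardsD1 b [set z | e v z]; rewrite /deg in h.
have : (1 < #|[set z | e v z] :\ b|)%N.
  move: h hc; case: (b \in [set z | e v z]) => /=; lia.
move=> /card_gt1P [n1 [n2 [h1 h2 h12]]].
move: h1 h2; rewrite !inE => /andP[? ?] /andP[? ?]; by exists n1, n2.
Qed.

Lemma anc1_leaf w l : (1 <= d w)%N -> (d w <= d l)%N -> anc (d w) l = w -> anc 1 l = anc 1 w.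
Proof. by move=> h1 h2 h3; rewrite -h3 anc_anc. Qed.

Lemma nbr_m z : e m z -> d z = 1%N.
Proof.
move=> h; have zn : z != par m.
  have -> : par m = m by apply: d0; rewrite d_par d_m.
  by apply/eqP => zm; move: h; rewrite zm eirr.
by rewrite (child h zn) d_m.
Qed.

Lemma nm_of_d1 z : d z = 1%N -> z != m.
Proof. by move=> h; apply/eqP => zm; move: h; rewrite zm d_m. Qed.

Lemma two_leaves b : exists l3 l4, [/\ l3 != l4, anc 1 l3 != b, anc 1 l4 != b,
   pendant e l3 & pendant e l4].
Proof.
have [n1 [n2 [e1 e2 n12 nb1 nb2]]] := two_nbrs b hmaj.
have d1 := nbr_m e1; have d2 := nbr_m e2.
have [l3 [h3 a3 p3]] := leaf_below (nm_of_d1 d1).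
have [l4 [h4 a4 p4]] := leaf_below (nm_of_d1 d2).
have b3 : anc 1 l3 = n1 by rewrite -d1 a3.
have b4 : anc 1 l4 = n2 by rewrite -d2 a4.
exists l3, l4; split => //; [| by rewrite b3 | by rewrite b4].
by apply/eqP => e34; move: n12; rewrite -b3 -b4 e34 eqxx.
Qed.

Lemma pend_nm v : pendant e v -> v != m.
Proof.
by move=> /eqP h; apply/eqP => vm; move: hmaj; rewrite /major -vm h.
Qed.

Lemma types a b : a != b -> pendant e a -> pendant e b -> anc 1 a != anc 1 b.
Proof.
move=> ab pa pb; apply/eqP => hab.
have [l3 [l4 [n34 na3 na4 p3 p4]]] := two_leaves (anc 1 a).
apply: (four (a := a) (b := b) (c := l3) (x := l4)) => //.
have na : forall l, anc 1 l != anc 1 a -> l != a by move=> l h; apply/eqP => la; move: h; rewrite la eqxx.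
have h3a := na _ na3; have h4a := na _ na4.
rewrite hab in na3 na4.
have nb : forall l, anc 1 l != anc 1 b -> l != b by move=> l h; apply/eqP => la; move: h; rewrite la eqxx.
have h3b := nb _ na3; have h4b := nb _ na4.
by rewrite /= !inE !negb_or ab n34 !(eq_sym a) !(eq_sym b) h3a h4a h3b h4b.
Qed.

Lemma deg_le2 y : y != m -> (deg e y <= 2)%N.
Proof.
move=> ym; rewrite leqNgt; apply/negP => h.
have [c1 [c2 [e1 e2 n12 nb1 nb2]]] := two_nbrs (par y) h.
have hd1 := child e1 nb1; have hd2 := child e2 nb2.
have hp1 := par_child e1 hd1; have hp2 := par_child e2 hd2.
have cm1 : c1 != m by apply/eqP => cm; move: hd1; rewrite cm d_m.
have cm2 : c2 != m by apply/eqP => cm; move: hd2; rewrite cm d_m.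
have [l1 [h1 a1 p1]] := leaf_below cm1.
have [l2 [h2 a2 p2]] := leaf_below cm2.
have hy := d_pos ym.
have b1 : anc 1 l1 = anc 1 y.
  by rewrite (anc1_leaf _ h1 a1) ?hd1 // (anc_child hp1 hd1).
have b2 : anc 1 l2 = anc 1 y.
  by rewrite (anc1_leaf _ h2 a2) ?hd2 // (anc_child hp2 hd2).
have [l3 [l4 [n34 na3 na4 p3 p4]]] := two_leaves (anc 1 y).
apply: (four (a := l1) (b := l2) (c := l3) (x := l4)) => //.
have n12' : l1 != l2.
  apply/eqP => e12; move: n12; rewrite -a1 -a2 hd1 hd2 e12 eqxx //.
have na : forall l, anc 1 l != anc 1 y -> (l != l1) && (l != l2).
  by move=> l hl; apply/andP; split; apply/eqP => ll; move: hl; rewrite ll ?b1 ?b2 eqxx.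
move: (na _ na3) (na _ na4) => /andP[h31 h32] /andP[h41 h42].
rewrite /= !inE !negb_or n12' n34 !(eq_sym l1) !(eq_sym l2) h31 h32 h41 h42 //.
Qed.

Lemma uniq_walk_traject y s : walk e y m s -> uniq (y :: s) -> y :: s = traject par y (d y).+1.
Proof.
elim: s y => [|z s IH] y.
  by rewrite /walk /= => /eqP ->; rewrite d_m.
rewrite /walk /= => /andP[/andP[hyz pz] lz] /andP[ny uz].
have wz : walk e z m s by rewrite /walk pz lz.
have ym : y != m.
  apply/eqP => ym; move: ny; rewrite ym; move: lz => /eqP <-.
  by rewrite mem_last.
have [hp hdp] := par_spec ym.
have zp : z = par y.
  apply/eqP; apply/negPn/negP => nz.
  have [g [wg hg]] := geo (par y).
  apply: (LB3 hyz hp nz wz ny wg).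
  rewrite inE negb_or; apply/andP; split.
    by apply/eqP => yp; move: hp; rewrite -yp eirr.
  apply/negP => /(avoid wg) h.
  have : (d y < d y)%N by rewrite -{2}hdp ltnS -hg ltnW.
  by rewrite ltnn.
rewrite (IH z wz uz) zp.
by rewrite -hdp.
Qed.

Lemma walk_traject j y : (j <= d y)%N -> walk e y (iter j par y) (traject par (par y) j).
Proof.
elim: j y => [|j IH] y hj; first by rewrite /walk /= eqxx.
have ym : y != m by apply/eqP => ym; move: hj; rewrite ym d_m.
have [hp hdp] := par_spec ym.
have := IH (par y) ltac:(lia); rewrite /walk => /andP[p1 l1].
by rewrite /= hp p1 /= -iterS iterSr.
Qed.

Lemma dist_iter j y : (j <= d y)%N -> dist e (iter j par y) y = j.
Proof.
move=> hj; apply/eqP; rewrite eqn_leq; apply/andP; split.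
  have w := walk_rev (walk_traject hj).
  by have := dist_le w; rewrite size_rev_belast size_traject.
have [t [wt ht]] := dist_ex (iter j par y) y.
have [g [wg hg]] := geo (iter j par y).
have := dist_le (walk_cat (walk_rev wt) wg).
rewrite size_cat size_rev_belast ht hg d_iter; lia.
Qed.


Variable R : realFieldType.
Local Open Scope ring_scope.

Definition g1 (k : nat) : R := nth 0 [:: 1; 1; 0; -1; -1; 0] (k %% 6).
Definition g2 (k : nat) : R := nth 0 [:: 1; 0; -1; -1; 0; 1] (k %% 6).
Definition G (b : bool) k := if b then g2 k else g1 k.

Lemma G0 b : G b 0 = 1.
Proof. by case: b. Qed.

Lemma G_rec b k : (1 <= k)%N -> G b k.-1 + G b k.+1 = G b k.
Proof.
move=> hk.
case E: (k %% 6)%N => [|[|[|[|[|[|r]]]]]]; last by exfalso; lia.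
all: have h := E.
- have h1 : (k.-1 %% 6 = 5)%N by lia. have h2 : (k.+1 %% 6 = 1)%N by lia.
  by case: b; rewrite /G /g1 /g2 h h1 h2 /=; ring.
- have h1 : (k.-1 %% 6 = 0)%N by lia. have h2 : (k.+1 %% 6 = 2)%N by lia.
  by case: b; rewrite /G /g1 /g2 h h1 h2 /=; ring.
- have h1 : (k.-1 %% 6 = 1)%N by lia. have h2 : (k.+1 %% 6 = 3)%N by lia.
  by case: b; rewrite /G /g1 /g2 h h1 h2 /=; ring.
- have h1 : (k.-1 %% 6 = 2)%N by lia. have h2 : (k.+1 %% 6 = 4)%N by lia.
  by case: b; rewrite /G /g1 /g2 h h1 h2 /=; ring.
- have h1 : (k.-1 %% 6 = 3)%N by lia. have h2 : (k.+1 %% 6 = 5)%N by lia.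
  by case: b; rewrite /G /g1 /g2 h h1 h2 /=; ring.
- have h1 : (k.-1 %% 6 = 4)%N by lia. have h2 : (k.+1 %% 6 = 0)%N by lia.
  by case: b; rewrite /G /g1 /g2 h h1 h2 /=; ring.
Qed.

Lemma g1_zero k : (k %% 3 = 2)%N -> g1 k = 0.
Proof.
move=> h; have : (k %% 6 = 2 \/ k %% 6 = 5)%N by lia.
by case=> h'; rewrite /g1 h'.
Qed.

Lemma g2_zero k : (k %% 3 = 1)%N -> g2 k = 0.
Proof.
move=> h; have : (k %% 6 = 1 \/ k %% 6 = 4)%N by lia.
by case=> h'; rewrite /g2 h'.
Qed.

Definition tau v := (v != m) && (anc 1 v == anc 1 u2).
Definition xf v := G (tau v) (d v).
Definition xv : 'cV[R]_n := \col_i xf i.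

Lemma lap_row i : (laplacian e R *m xv) i 0 =
  (deg e i)%:R * xf i - \sum_(j in [set z | e i z]) xf j.
Proof.
rewrite !mxE.
under eq_bigr do rewrite !mxE mulrBl.
rewrite sumrB; congr (_ - _).
  rewrite (bigD1 i) //= eqxx big1 ?addr0 // => j /negPf ji.
  by rewrite eq_sym ji mul0r.
rewrite [RHS]big_mkcond /=; apply: eq_bigr => j _.
by rewrite inE; case: (e i j); rewrite ?mul1r ?mul0r.
Qed.

Lemma tau_m : xf m = 1.
Proof. by rewrite /xf d_m G0. Qed.

Lemma x_par v : v != m -> xf (par v) = G (tau v) (d v).-1.
Proof.
move=> vm; have hv := d_pos vm.
case: (eqVneq (par v) m) => [pm|pm].
  by rewrite pm tau_m -d_par pm d_m G0.
have hpv := d_pos pm.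
rewrite /xf d_par; congr G.
rewrite /tau pm vm /=.
have [hp hdp] := par_spec vm.
by rewrite (anc_child (k := 1) (erefl _) (sym_equal hdp)).
Qed.

Lemma x_child v c : v != m -> par c = v -> d c = (d v).+1 -> xf c = G (tau v) (d v).+1.
Proof.
move=> vm hp hd; have hv := d_pos vm.
have cm : c != m by apply/eqP => cm; move: hd; rewrite cm d_m.
rewrite /xf hd; congr G.
by rewrite /tau cm vm /= (anc_child (k := 1) hp hd).
Qed.

Lemma u_pend k : k \in [:: u1; u2; u3] -> pendant e k.
Proof. by rewrite hpend. Qed.

Lemma tau_u1 : tau u1 = false.
Proof.
have h : u1 != u2.
  by apply/eqP => h12; move: huniq; rewrite h12 /= inE eqxx.
by rewrite /tau (negPf (types h (u_pend (mem_head _ _)) (u_pend _))) ?andbF // !inE eqxx orbT.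
Qed.

Lemma tau_u3 : tau u3 = false.
Proof.
have h : u3 != u2.
  by apply/eqP => h32; move: huniq; rewrite h32 /= mem_seq1 eqxx /= andbF.
by rewrite /tau (negPf (types h (u_pend _) (u_pend _))) ?andbF // !inE eqxx ?orbT.
Qed.

Lemma tau_u2 : tau u2 = true.
Proof. by rewrite /tau eqxx andbT pend_nm // u_pend // !inE eqxx orbT. Qed.

Hypothesis hd1 : (dist e u1 m %% 3 = 0)%N.
Hypothesis hd2 : (dist e u2 m %% 3 = 2)%N.
Hypothesis hd3 : (dist e u3 m %% 3 = 0)%N.

Lemma eigen_m : (deg e m)%:R * xf m - \sum_(j in [set z | e m z]) xf j = xf m.
Proof.
set N := [set z | e m z].
have u2p : pendant e u2 by apply: u_pend; rewrite !inE eqxx orbT.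
have u2m := pend_nm u2p.
have hu2 := d_pos u2m.
set b2 := anc 1 u2.
have db2 : d b2 = 1%N by rewrite d_anc.
have b2m := nm_of_d1 db2.
have pb2 : par b2 = m by apply: d0; rewrite d_par db2.
have b2N : b2 \in N by have [h _] := par_spec b2m; rewrite inE esym -pb2 h.
have ab2 : anc 1 b2 = b2 by rewrite -{1}db2 anc_self.
rewrite (big_setD1 b2) //=.
have -> : xf b2 = 0 by rewrite /xf /tau b2m ab2 eqxx db2.
rewrite add0r.
have -> : \sum_(j in N :\ b2) xf j = \sum_(j in N :\ b2) (1 : R).
  apply: eq_bigr => j; rewrite !inE => /andP[jb ej].
  have dj := nbr_m ej.
  have aj : anc 1 j = j by rewrite -{1}dj anc_self.
  by rewrite /xf /tau aj (negPf jb) andbF dj.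
rewrite sumr_const /deg -/N (cardsD1 b2 N) b2N tau_m.
by rewrite mulr1 natrD addrK.
Qed.

Lemma leaf_zero i : i != m -> pendant e i -> G (tau i) (d i).-1 = 0.
Proof.
move=> im; rewrite hpend !inE => /or3P[] /eqP ->.
- rewrite tau_u1 /G g1_zero //; have := d_pos (pend_nm (u_pend (mem_head _ _))); lia.
- rewrite tau_u2 /G g2_zero //.
  have := d_pos (pend_nm (u_pend (k := u2) ltac:(by rewrite !inE eqxx orbT))); lia.
- rewrite tau_u3 /G g1_zero //.
  have := d_pos (pend_nm (u_pend (k := u3) ltac:(by rewrite !inE eqxx !orbT))); lia.
Qed.

Lemma eigen i : (deg e i)%:R * xf i - \sum_(j in [set z | e i z]) xf j = xf i.
Proof.
case: (eqVneq i m) => [->|im]; first exact: eigen_m.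
set N := [set z | e i z].
have [hp hdp] := par_spec im.
have hi := d_pos im.
have pN : par i \in N by rewrite inE.
have hle := deg_le2 im.
have hc := cardsD1 (par i) N; rewrite pN in hc.
rewrite (big_setD1 (par i)) //= x_par //.
move: hle; rewrite /deg -/N hc.
case E: #|N :\ par i| => [|[|k]] // _.
- have -> : N :\ par i = set0 by apply/eqP; rewrite -cards_eq0 E.
  rewrite big_set0 addr0 leaf_zero ?subr0 ?mul1r //.
  by rewrite /pendant /deg -/N hc E.
- have /cards1P [c hcN] : #|N :\ par i| == 1%N by rewrite E.
  have : c \in N :\ par i by rewrite hcN inE.
  rewrite !inE => /andP[cp ec].
  have hdc := child ec cp.
  have hpc := par_child ec hdc.
  rewrite hcN big_set1 (x_child im hpc hdc) G_rec //.
  by rewrite /xf mulr2n mulrDl mul1r addrK.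
Qed.

Lemma main_sec : exists x : 'cV[R]_n,
    [/\ x != 0, laplacian e R *m x = x &
      forall (k : 'I_n) (v : 'I_n), k \in [:: u1; u2; u3] ->
        on_path e k m v -> (dist e v k %% 3 = 1)%N -> x v 0 = 0].
Proof.
exists xv; split.
- apply/eqP => h; have := congr1 (fun M : 'cV[R]_n => M m 0) h.
  by rewrite !mxE tau_m => /eqP; rewrite oner_eq0.
- by apply/matrixP => i j; rewrite ord1 lap_row eigen mxE.
move=> k v hk [s /and3P[w u hv]] hmod.
have km := pend_nm (u_pend hk).
rewrite (uniq_walk_traject w u) in hv.
case/trajectP: hv => j hj hvj; subst v.
rewrite dist_iter in hmod; last lia.
rewrite mxE /xf d_iter.
have hkd : ((d k %% 3 = 0) /\ tau k = false \/ (d k %% 3 = 2) /\ tau k = true)%N.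
  move: hk; rewrite !inE => /or3P[] /eqP ->.
  + by left; rewrite tau_u1.
  + by right; rewrite tau_u2.
  + by left; rewrite tau_u3.
clear hd1 hd2 hd3.
case: (eqVneq (iter j par k) m) => [vm|vm].
  have : d (iter j par k) = 0%N by rewrite vm d_m.
  rewrite d_iter => h0; exfalso; case: hkd => [[h _]|[h _]].
    have hjk : j = d k by lia.
    by move: h; rewrite -hjk hmod.
  have hjk : j = d k by lia.
  by move: h; rewrite -hjk hmod.
have hv := d_pos vm; rewrite d_iter in hv.
have ht : tau (iter j par k) = tau k.
  have hdkj : (d k - (d k - j) = j)%N by move: hj; move: (d k) => D; clear; lia.
  have -> : iter j par k = anc (d k - j) k by rewrite /anc hdkj.
  have hle : (d k - j <= d k)%N by apply: leq_subr.
  rewrite /tau km (anc_anc (j := 1)) //.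
  have -> // : anc (d k - j) k != m.
  by rewrite /anc hdkj.
rewrite ht; case: hkd => [[h ->]|[h ->]]; rewrite /G.
  apply: g1_zero; move: h hmod hv hj; move: (d k) => D; clear; lia.
apply: g2_zero; move: h hmod hv hj; move: (d k) => D; clear; lia.
Qed.

End Tree.

Unset Implicit Arguments.
Local Open Scope ring_scope.

Theorem mainTheorem8 (R : realFieldType) (n : nat) (e : rel 'I_n)
  (u1 u2 u3 m : 'I_n) :
  is_tree e ->
  uniq [:: u1; u2; u3] ->
  (forall v, pendant e v = (v \in [:: u1; u2; u3])) ->
  major e m ->
  (dist e u1 m %% 3 = 0)%N ->
  (dist e u2 m %% 3 = 2)%N ->
  (dist e u3 m %% 3 = 0)%N ->
  exists x : 'cV[R]_n,
    [/\ x != 0, laplacian e R *m x = x &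
      forall (k : 'I_n) (v : 'I_n), k \in [:: u1; u2; u3] ->
        on_path e k m v -> (dist e v k %% 3 = 1)%N -> x v 0 = 0].
Proof.
move=> [[hs hi] [hc ha]] hu hp hm h1 h2 h3.
exact: (@main_sec n e hs hi hc ha m u1 u2 u3 hu hp hm R h1 h2 h3).
Qed.
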